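(* Let $f:\mathbb{R}^n \to \mathbb{R}$ be strongly convex and let $C \subset \mathbb{R}^n$ be a nonempty closed convex set. (a) For all $x \in \mathbb{R}^n$, $x^* \in \partial f(x)$ and $y^* \in \partial f\big(P_C(x)\big)$ we have \[ \operatorname{dist}_f^{x^*}(x,C)^2 \le \|x^*-y^*\|_2 \cdot \operatorname{dist}(x,C). \] (b) If $f$ is differentiable with an $L$-Lipschitz-continuous gradient, then for all $x \in \mathbb{R}^n$ \[ \operatorname{dist}_f(x,C)^2 \le \tfrac{L}{2} \cdot \operatorname{dist}(x,C)^2 . \]
   Context: A convex $f:\mathbb{R}^n\to\mathbb{R}$ is $\alpha$-strongly convex ($\alpha>0$) if $f(y)\ge f(x)+\langle x^*,y-x\rangle+\frac{\alpha}{2}\|y-x\|_2^2$ for all $x,y$ and all $x^*\in\partial f(x)$; strongly convex means $\alpha$-strongly convex for some $\alpha>0$. For $x^*\in\partial f(x)$ the Bregman distance is $D_f^{x^*}(x,y)=f(y)-f(x)-\langle x^*,y-x\rangle$; for a nonempty closed convex set $C$, $\operatorname{dist}_f^{x^*}(x,C)^2:=\min_{y\in C}D_f^{x^*}(x,y)$ (the minimizer, the Bregman projection, exists and is unique). If $f$ is differentiable, the superscript $x^*=\nabla f(x)$ is dropped and one writes $\operatorname{dist}_f(x,C)$. $P_C$ denotes the orthogonal (Euclidean) projection onto $C$ and $\operatorname{dist}(x,C)$ the Euclidean distance. *)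

(* Defs.v *)
From HB Require Import structures.
From mathcomp Require Import all_boot all_order all_algebra.
From mathcomp Require Import all_classical all_reals all_analysis.
Set Implicit Arguments. Unset Strict Implicit. Unset Printing Implicit Defensive.
Import Order.TTheory GRing.Theory Num.Theory.
Import numFieldNormedType.Exports.
Local Open Scope classical_set_scope.
Local Open Scope ring_scope.

Section Defs.
Variables (R : realType) (n : nat).
Implicit Types (x y z p xs : 'rV[R]_n) (f : 'rV[R]_n -> R) (C : set 'rV[R]_n).

Definition edot x y : R := \sum_(i < n) x 0 i * y 0 i.
Definition enorm x : R := Num.sqrt (edot x x).

Definition eucl_dist x C : R := inf [set enorm (x - y) | y in C].

Definition is_proj C x p : Prop := C p /\ forall z, C z -> enorm (x - p) <= enorm (x - z).

Definition is_subgrad f x xs : Prop := forall y, f x + edot xs (y - x) <= f y.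

Definition cvx_fun f : Prop :=
  forall x y (t : R), 0 <= t <= 1 -> f (t *: x + (1 - t) *: y) <= t * f x + (1 - t) * f y.

Definition cvx_set C : Prop :=
  forall x y (t : R), 0 <= t <= 1 -> C x -> C y -> C (t *: x + (1 - t) *: y).

Definition strongly_convex_with f (alpha : R) : Prop :=
  cvx_fun f /\ 0 < alpha /\
  forall x y xs, is_subgrad f x xs ->
    f x + edot xs (y - x) + alpha / 2 * enorm (y - x) ^+ 2 <= f y.

Definition strongly_convex f : Prop := exists alpha : R, strongly_convex_with f alpha.

Definition bregman f xs x y : R := f y - f x - edot xs (y - x).

(* dist_f^{x^*}(x, C)^2 := min_{y in C} D_f^{x^*}(x,y), written as an infimum *)
Definition bdist2 f xs x C : R := inf [set bregman f xs x y | y in C].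

Definition is_gradient f x (g : 'rV[R]_n) : Prop :=
  differentiable f x /\ forall h, 'd f x h = edot g h.

End Defs.

(* Main.v *)
Require Import Defs.
From HB Require Import structures.
From mathcomp Require Import all_boot all_order all_algebra.
From mathcomp Require Import all_classical all_reals all_analysis.
From mathcomp Require Import ring lra.
Import Order.TTheory GRing.Theory Num.Theory.
Import numFieldNormedType.Exports.
Local Open Scope classical_set_scope.
Local Open Scope ring_scope.


Set Implicit Arguments. Unset Strict Implicit.
Section Aux.
Variables (R : realType) (n : nat).
Implicit Types (x y z : 'rV[R]_n).

Lemma edotC x y : edot x y = edot y x.
Proof. by apply: eq_bigr => i _; rewrite mulrC. Qed.

Lemma edotDl x y z : edot (x + y) z = edot x z + edot y z.
Proof. by rewrite /edot -big_split; apply: eq_bigr => i _; rewrite !mxE mulrDl. Qed.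

Lemma edotNl x z : edot (- x) z = - edot x z.
Proof. by rewrite /edot -sumrN; apply: eq_bigr => i _; rewrite !mxE mulNr. Qed.

Lemma edotBl x y z : edot (x - y) z = edot x z - edot y z.
Proof. by rewrite edotDl edotNl. Qed.

Lemma edotZl (a : R) x z : edot (a *: x) z = a * edot x z.
Proof. by rewrite /edot mulr_sumr; apply: eq_bigr => i _; rewrite !mxE mulrA. Qed.

Lemma edotDr x y z : edot z (x + y) = edot z x + edot z y.
Proof. by rewrite ![edot z _]edotC edotDl. Qed.

Lemma edotBr x y z : edot z (x - y) = edot z x - edot z y.
Proof. by rewrite ![edot z _]edotC edotBl. Qed.

Lemma edotZr (a : R) x z : edot z (a *: x) = a * edot z x.
Proof. by rewrite ![edot z _]edotC edotZl. Qed.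

Lemma edot_ge0 x : 0 <= edot x x.
Proof. by apply: sumr_ge0 => i _; rewrite -expr2 sqr_ge0. Qed.

Lemma enorm_ge0 x : 0 <= enorm x.
Proof. exact: sqrtr_ge0. Qed.

Lemma enorm2 x : enorm x ^+ 2 = edot x x.
Proof. by rewrite sqr_sqrtr // edot_ge0. Qed.

Lemma edot0 x : edot x x = 0 -> forall y, edot x y = 0.
Proof.
move/psumr_eq0P => H y; rewrite /edot big1 // => i _.
have /eqP : x 0 i * x 0 i = 0 by apply: H => // j _; rewrite -expr2 sqr_ge0.
by rewrite mulf_eq0 orbb => /eqP ->; rewrite mul0r.
Qed.

Lemma CS x y : edot x y <= enorm x * enorm y.
Proof.
set a := enorm x; set b := enorm y.
have ha : 0 <= a := enorm_ge0 x. have hb : 0 <= b := enorm_ge0 y.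
have e := edot_ge0 (b *: x - a *: y).
rewrite !(edotBl, edotBr, edotZl, edotZr) -!enorm2 -/a -/b [edot y x]edotC in e.
have [a0|ap] := eqVneq a 0.
  have : edot x x = 0 by rewrite -enorm2 -/a a0 expr0n.
  by move/edot0 => ->; rewrite a0 mul0r.
have [b0|bp] := eqVneq b 0.
  have : edot y y = 0 by rewrite -enorm2 -/b b0 expr0n.
  by move/edot0 => h; rewrite edotC h b0 mulr0.
have abp : 0 < a * b by rewrite mulr_gt0 // lt_neqAle eq_sym ?ap ?bp.
rewrite -subr_ge0; rewrite -(pmulr_rge0 _ abp); nra.
Qed.

Lemma enormZ (t : R) x : enorm (t *: x) = `|t| * enorm x.
Proof. by rewrite /enorm edotZl edotZr mulrA -expr2 sqrtrM ?sqr_ge0 // sqrtr_sqr. Qed.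

Lemma enormN x : enorm (- x) = enorm x.
Proof. by rewrite -scaleN1r enormZ normrN normr1 mul1r. Qed.

Lemma edotNr x z : edot z (- x) = - edot z x.
Proof. by rewrite ![edot z _]edotC edotNl. Qed.

End Aux.

Lemma inf_le_b (R : realType) (S : set R) (a b : R) : S a -> a <= b -> 0 <= b -> inf S <= b.
Proof.
move=> Sa ab b0; case: (pselect (has_lbound S)) => hl.
  exact: le_trans (ge_inf hl Sa) ab.
by rewrite inf_out // => -[].
Qed.

Unset Implicit Arguments.
Lemma descent (R : realType) (n : nat) (f : 'rV[R]_n -> R) (L : R) (g : 'rV[R]_n -> 'rV[R]_n) :
  (forall x, is_gradient f x (g x)) ->
  (forall x y, enorm (g x - g y) <= L * enorm (x - y)) ->
  forall x y, bregman f (g x) x y <= L / 2 * enorm (x - y) ^+ 2.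
Proof.
move=> Hg HL x y.
set h := y - x.
pose phi := fun t : R => f (x + t *: h).
have dphi (t : R) : is_derive t (1:R) phi (edot (g (x + t *: h)) h).
  set p := x + t *: h.
  have E : (fun s : R => s^-1 *: ((phi \o shift t) (s *: 1) - phi t)) =
           (fun s => s^-1 *: ((f \o shift p) (s *: h) - f p)).
    apply/funext => s /=; rewrite /phi /p.
    by rewrite [s *: 1]mulr1 scalerDl addrCA.
  have [dfp dfe] := Hg p.
  apply: DeriveDef.
    by rewrite /derivable E; exact: diff_derivable.
  by rewrite /derive E; have := deriveE h dfp; rewrite /derive => ->; exact: dfe.
set c := edot (g x) h.
set K := L / 2 * enorm h ^+ 2.
pose psi := phi - c \*: id - K \*: (id * id).
pose df := fun t : R => edot (g (x + t *: h)) h - c *: 1 - K *: (t *: 1 + t *: 1).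
have dpsi (t : R) : is_derive t (1:R) psi (df t).
  exact: is_deriveB.
have cont : {within `[0, 1], continuous psi}.
  by apply: derivable_within_continuous => t _; exact: (@ex_derive _ _ _ _ _ _ _ (dpsi t)).
have [t0 t0in E] := MVT ltr01 (fun t _ => dpsi t) cont.
have t0ge : 0 <= t0 by move: t0in; rewrite in_itv /= => /andP[/ltW].
have dfle : df t0 <= 0.
  have sc : forall a b : R, a *: b = a * b by [].
  rewrite /df /= !sc !mulr1 /c.
  have := CS (g (x + t0 *: h) - g x) h.
  rewrite edotBl.
  have := HL (x + t0 *: h) x.
  rewrite addrAC subrr add0r enormZ ger0_norm //.
  have := enorm_ge0 h.
  rewrite /K.
  move: (enorm h) (enorm (g (x + t0 *: h) - g x)) => a b ha hb hcs.
  nra.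
have Ev : forall t, psi t = phi t - c * t - K * (t * t) by [].
move: E; rewrite subr0 mulr1 !Ev /phi scale0r addr0 scale1r.
have -> : x + h = y by rewrite /h addrC subrK.
rewrite /bregman -/h -/c /K.
move=> E; rewrite -[x - y]opprB enormN -/h.
nra.
Qed.

Theorem lemma3p3 (R : realType) (n : nat) (f : 'rV[R]_n -> R) (C : set 'rV[R]_n) :
  strongly_convex f -> C !=set0 -> closed C -> cvx_set C ->
  (forall (x xs p ys : 'rV[R]_n),
      is_subgrad f x xs -> is_proj C x p -> is_subgrad f p ys ->
      bdist2 f xs x C <= enorm (xs - ys) * eucl_dist x C) /\
  (forall (L : R) (g : 'rV[R]_n -> 'rV[R]_n),
      (forall x, is_gradient f x (g x)) ->
      (forall x y, enorm (g x - g y) <= L * enorm (x - y)) ->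
      forall x, bdist2 f (g x) x C <= L / 2 * eucl_dist x C ^+ 2).
Proof.
move=> _ [y0 Cy0] _ _.
have dge0 x : 0 <= eucl_dist x C.
  apply: lb_le_inf; first by exists (enorm (x - y0)), y0.
  by move=> _ [y _ <-]; exact: enorm_ge0.
have hlb x : has_lbound [set enorm (x - y) | y in C].
  by exists 0 => _ [y _ <-]; exact: enorm_ge0.
split.
  move=> x xs p ys Hxs [Cp Hp] Hys.
  have dist : eucl_dist x C = enorm (x - p).
    apply/eqP; rewrite eq_le; apply/andP; split.
      by apply: (ge_inf (hlb x)); exists p.
    apply: lb_le_inf; first by exists (enorm (x - p)), p.
    by move=> _ [y Cy <-]; exact: Hp.
  rewrite dist.
  rewrite /bdist2; apply: (inf_le_b (a := bregman f xs x p)); first by exists p.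
    rewrite /bregman.
    have := Hys x; have := CS (xs - ys) (x - p); rewrite edotBl.
    rewrite -[p - x]opprB edotNr.
    lra.
  by rewrite mulr_ge0 // enorm_ge0.
move=> L g Hg HL x.
have desc := @descent R n f L g Hg HL.
case: (ltP L 0) => HL0.
  have e0 y : enorm (x - y) = 0.
    have := HL x y; have := enorm_ge0 (g x - g y); have := enorm_ge0 (x - y).
    move=> a b c; apply/eqP; rewrite eq_le a andbT.
    rewrite leNgt; apply/negP => hp.
    have : L * enorm (x - y) < 0 by rewrite nmulr_rlt0.
    lra.
  have d0 : eucl_dist x C = 0.
    apply/eqP; rewrite eq_le dge0 andbT.
    by rewrite -(e0 y0); apply: (ge_inf (hlb x)); exists y0.
  rewrite d0; rewrite /bdist2; apply: (inf_le_b (a := bregman f (g x) x y0)); first by exists y0.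
    by have := desc x y0; rewrite e0 expr0n /= !mulr0.
  by rewrite expr0n /= mulr0.
have key y : C y -> bdist2 f (g x) x C <= L / 2 * enorm (x - y) ^+ 2.
  move=> Cy; rewrite /bdist2; apply: (inf_le_b (a := bregman f (g x) x y)); first by exists y.
    exact: desc.
  by rewrite mulr_ge0 ?divr_ge0 // sqr_ge0.
set d := eucl_dist x C.
have H e : 0 < e -> bdist2 f (g x) x C <= L / 2 * (d + e) ^+ 2.
  move=> he.
  have hi : has_inf [set enorm (x - y) | y in C].
    by split; [exists (enorm (x - y0)), y0 | exact: hlb].
  have [_ [y Cy <-] lt] := inf_adherent he hi.
  apply: (le_trans (key y Cy)).
  have := enorm_ge0 (x - y); have := dge0 x; rewrite -/d.
  move: lt; rewrite -/d; move: (enorm (x - y)) => v.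
  move=> a b c; apply: ler_wpM2l; first by rewrite divr_ge0.
  rewrite ler_sqr ?nnegrE; [exact: ltW | exact: c | lra].
have d0 : 0 <= d := dge0 x.
move: H; move: (bdist2 f (g x) x C) => b H.
rewrite leNgt; apply/negP => hlt.
set M := L * (2 * d + 1) + 1.
have M0 : 0 < M by rewrite /M; nra.
set e := Num.min 1 ((b - L / 2 * d ^+ 2) / M).
have e0 : 0 < e by rewrite /e lt_min ltr01 divr_gt0 // subr_gt0.
have e1 : e <= 1 by rewrite /e ge_min lexx.
have eM : e * M <= b - L / 2 * d ^+ 2.
  by rewrite -ler_pdivlMr // /e ge_min lexx orbT.
have := H e e0.
have h1 : 0 <= L * e * (1 - e) by rewrite mulr_ge0 ?mulr_ge0 ?subr_ge0 // ltW.
have h2 : 0 <= L * d * e by rewrite mulr_ge0 ?mulr_ge0 // ltW.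
move: eM; rewrite /M; move: hlt; nra.
Qed.
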